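(* For each $c<\frac14$ there is $\lambda_0$ such that for all $\lambda>\lambda_0$ and all even rectangles $\Lambda$, $$Z^{\mathrm{per}}_{\Lambda,\lambda}\ge e^{c\lambda^{-1/2}\mathrm{Area}(\Lambda)}.$$
   Context: Tiles: $T_{(x,y)}=[x-1,x+1]\times[y-1,y+1]$; $\Omega=\{\sigma\in\{0,1\}^{\mathbb{Z}^2}: \sigma(u)=\sigma(v)=1,u\ne v\Rightarrow\mathrm{int}(T_u)\cap\mathrm{int}(T_v)=\emptyset\}$. A rectangle $[x,x+K]\times[y,y+L]$ (integers, $K,L\ge1$) is even if $x,y,K,L$ are even; $\mathrm{Area}=KL$. Faces: unit squares with integer corners; vacant if in no tile. $w_{\Lambda,\lambda}(\sigma)=\lambda^{-\frac14\#\{\text{vacant faces}\subset\Lambda\}}$; $\Omega^{\mathrm{per}}_\Lambda$ = configurations periodic under $(\mathrm{Width}\Lambda,0),(0,\mathrm{Height}\Lambda)$; $Z^{\mathrm{per}}_{\Lambda,\lambda}=\sum_{\sigma\in\Omega^{\mathrm{per}}_\Lambda}w_{\Lambda,\lambda}(\sigma)$. *)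

(* Defs.v *)
From HB Require Import structures.
From mathcomp Require Import all_boot all_order all_algebra.
From mathcomp Require Import all_classical all_reals all_analysis.
Set Implicit Arguments. Unset Strict Implicit. Unset Printing Implicit Defensive.
Import Order.TTheory GRing.Theory Num.Theory.
Local Open Scope ring_scope.

Definition config := int * int -> bool.

(* Tile T_u = [u1-1,u1+1] x [u2-1,u2+1].  For integer centres u, v the open
   squares int(T_u), int(T_v) intersect iff |u1-v1| < 2 and |u2-v2| < 2. *)
Definition tiles_overlap (u v : int * int) : bool :=
  (`|u.1 - v.1| < 2) && (`|u.2 - v.2| < 2).

Definition admissible (s : config) : Prop :=
  forall u v : int * int, s u -> s v -> u <> v -> ~~ tiles_overlap u v.

(* The face (unit square) [a,a+1] x [b,b+1] is contained in T_u iff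
   u1 - 1 <= a <= u1 and u2 - 1 <= b <= u2. *)
Definition face_in_tile (f u : int * int) : bool :=
  [&& u.1 - 1 <= f.1, f.1 <= u.1, u.2 - 1 <= f.2 & f.2 <= u.2].

(* A face is vacant if it lies in no tile of sigma; the only candidate
   centres are f + {0,1}^2. *)
Definition vacant (s : config) (f : int * int) : bool :=
  ~~ [exists d : bool * bool,
        let u := (f.1 + (d.1 : nat)%:Z, f.2 + (d.2 : nat)%:Z) in
        s u && face_in_tile f u].

(* Rectangle Lambda = [x, x+K] x [y, y+L]; its faces are [a,a+1]x[b,b+1]
   with x <= a < x+K, y <= b < y+L. *)
Definition n_vacant (x y : int) (K L : nat) (s : config) : nat :=
  #|[set p : 'I_K * 'I_L | vacant s (x + (p.1 : nat)%:Z, y + (p.2 : nat)%:Z)]|.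

Definition weight {R : realType} (x y : int) (K L : nat) (lam : R)
  (s : config) : R :=
  powR lam (- ((n_vacant x y K L s)%:R / 4)).

(* Periodic configurations (periods (K,0),(0,L), K,L >= 1) are in bijection
   with functions on the torus 'I_K x 'I_L (written 'I_K.-1.+1 so that the
   type is inhabited by construction). *)
Definition torus_idx (n : nat) (a : int) : 'I_n.-1.+1 :=
  inord (absz (a %% n%:Z)%Z).

Definition per_ext (K L : nat) (f : {ffun 'I_K.-1.+1 * 'I_L.-1.+1 -> bool})
  : config := fun p => f (torus_idx K p.1, torus_idx L p.2).

Definition periodic (K L : nat) (s : config) : Prop :=
  forall p : int * int,
    s (p.1 + K%:Z, p.2) = s p /\ s (p.1, p.2 + L%:Z) = s p.

Definition Zper {R : realType} (x y : int) (K L : nat) (lam : R) : R :=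
  \sum_(f : {ffun 'I_K.-1.+1 * 'I_L.-1.+1 -> bool}
          | `[< admissible (per_ext f) >])
     weight x y K L lam (per_ext f).

Definition even_int (z : int) : bool := (2 %| z)%Z.

(* Main.v *)
Require Import Defs.
From HB Require Import structures.
From mathcomp Require Import all_boot all_order all_algebra.
From mathcomp Require Import all_classical all_reals all_analysis.
From mathcomp Require Import zify ring lra.
Import Order.TTheory GRing.Theory Num.Theory.
Local Open Scope ring_scope.

Definition tI (N : nat) (a : int) : nat := absz (a %% N%:Z)%Z.

Lemma tI_lt N a : (0 < N)%N -> (tI N a < N)%N.
Proof.
move=> N0; rewrite /tI.
have h1 : (0 <= (a %% N%:Z)%Z) by apply: modz_ge0; rewrite eqz_nat -lt0n.
have h2 : ((a %% N%:Z)%Z < `|N%:Z|) by apply: ltz_mod; rewrite eqz_nat -lt0n.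
by move: h1 h2; case: (a %% N%:Z)%Z.
Qed.

Lemma tI_add N a (k : nat) : (0 < N)%N -> tI N (a + k%:Z) = ((tI N a + k) %% N)%N.
Proof.
move=> N0; rewrite /tI.
have h1 : (0 <= (a %% N%:Z)%Z) by apply: modz_ge0; rewrite eqz_nat -lt0n.
rewrite -modzDml.
move: h1; case: (a %% N%:Z)%Z => // r _ /=.
by rewrite -PoszD modz_nat.
Qed.

Lemma torus_val N a : (0 < N)%N -> nat_of_ord (torus_idx N a) = tI N a.
Proof.
move=> N0; rewrite /torus_idx inordK //.
by rewrite prednK // tI_lt.
Qed.

Lemma sum_rot (N r : nat) (h : nat -> nat) :
  (\sum_(b < N) h ((r + b) %% N)%N = \sum_(b < N) h b)%N.
Proof.
case: N h => [|N] h; first by rewrite !big_ord0.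
have lt : forall b : 'I_N.+1, ((r + b) %% N.+1 < N.+1)%N by move=> b; rewrite ltn_mod.
pose s (b : 'I_N.+1) : 'I_N.+1 := Ordinal (lt b).
have inj : injective s.
  move=> b1 b2 /(congr1 val) /= /eqP.
  rewrite eqn_modDl => /eqP; rewrite !modn_small // => E; exact: val_inj.
rewrite [RHS](reindex_inj inj) /=. by [].
Qed.

Lemma sum_double (n : nat) (h : nat -> nat) :
  (\sum_(j < n.*2) h j = \sum_(k < n) (h k.*2 + h k.*2.+1))%N.
Proof.
elim: n => [|n IH]; first by rewrite !big_ord0.
rewrite doubleS !big_ord_recr /= IH addnA.
by [].
Qed.

Section Col.
Variable n : nat.
Definition fget (f : {ffun 'I_n -> bool}) (k : nat) : bool :=
  if insub k is Some o then f o else false.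
Definition cpar (q : bool * {ffun 'I_n -> bool}) (k : nat) : bool :=
  q.1 (+) odd (\sum_(j < k) fget q.2 j)%N.
Definition crow q (j : nat) : bool :=
  if odd j then ~~ cpar q j./2 && ~~ cpar q ((j./2).+1 %% n)
  else cpar q j./2.
Definition fsum (f : {ffun 'I_n -> bool}) : nat := (\sum_(k < n) f k)%N.

Lemma fget_val f (o : 'I_n) : fget f o = f o.
Proof. by rewrite /fget valK. Qed.

Lemma fsumE f : fsum f = (\sum_(k < n) fget f k)%N.
Proof. by apply: eq_bigr => o _; rewrite fget_val. Qed.

Lemma half_d1 k : (k.*2.+1)./2 = k.
Proof. by rewrite /= uphalf_double. Qed.

Lemma cpar_trans q k : (0 < n)%N -> ~~ odd (fsum q.2) -> (k < n)%N ->
  (cpar q k != cpar q (k.+1 %% n)) = fget q.2 k.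
Proof.
move=> n0 ev kn; rewrite /cpar.
case: (ltngtP k.+1 n) => [lt|gt|E].
- rewrite modn_small // big_ord_recr /= oddD oddb.
  by case: q.1; case: (odd _); case: (fget _ _).
- exfalso; move: gt kn; lia.
- rewrite E modnn big_ord0 /=.
  have S : (\sum_(j < n) fget q.2 j = \sum_(j < k.+1) fget q.2 j)%N.
    by rewrite -!(big_mkord (fun _ => true) (fun j => nat_of_bool (fget q.2 j))) E.
  move: ev; rewrite fsumE S big_ord_recr /= oddD oddb.
  by case: q.1; case: (odd _); case: (fget _ _).
Qed.

Lemma dmod a : ((a.*2) %% n.*2 = (a %% n).*2)%N.
Proof. by rewrite -!mul2n muln_modr. Qed.

Lemma crow_even q a : crow q a.*2 = cpar q a.
Proof. by rewrite /crow odd_double doubleK. Qed.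

Lemma crow_adj q j : (0 < n)%N -> (j < n.*2)%N ->
  ~~ (crow q j && crow q (j.+1 %% n.*2)).
Proof.
move=> n0 jn.
have Ej := odd_double_half j.
set k := j./2 in Ej *.
case oj: (odd j) Ej => /= Ej.
- have -> : j.+1 = (k.+1).*2 by rewrite -Ej doubleS.
  rewrite dmod crow_even /crow oj -/k.
  by case: (cpar _ _); case: (cpar _ _).
- have j1 : (j.+1 < n.*2)%N.
    rewrite -Ej; move: jn; rewrite -Ej => jn.
    have: ~~ odd (n.*2) by rewrite odd_double.
    move: jn; rewrite -!muln2; lia.
  rewrite (modn_small j1) -Ej crow_even /crow /=.
  rewrite add0n odd_double uphalf_double /=.
  by case: (cpar _ _).
Qed.
Lemma crow_odd q k : crow q k.*2.+1 = ~~ cpar q k && ~~ cpar q (k.+1 %% n).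
Proof. by rewrite /crow /= odd_double /= uphalf_double. Qed.

Lemma vac_col q : (0 < n)%N -> ~~ odd (fsum q.2) ->
  (\sum_(j < n.*2) (~~ crow q j && ~~ crow q (j.+1 %% n.*2)))%N = fsum q.2.
Proof.
move=> n0 ev.
rewrite (sum_double n (fun j => nat_of_bool (~~ crow q j && ~~ crow q (j.+1 %% n.*2)))).
rewrite fsumE; apply: eq_bigr => k _.
have kn := ltn_ord k.
have k1 : (k.*2.+1 < n.*2)%N by move: kn; rewrite -!muln2; lia.
rewrite (modn_small k1) -doubleS dmod crow_even crow_odd -(cpar_trans q k n0 ev kn).
by rewrite crow_even; case: (cpar q k); case: (cpar _ _).
Qed.
End Col.
Arguments fsum {n} f.
Arguments fget {n} f k.
Arguments cpar {n} q k.
Arguments crow {n} q j.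

Lemma sum_pow (R : comPzRingType) n (x : R) :
  \sum_(f : {ffun 'I_n -> bool}) x ^+ fsum f = (1 + x) ^+ n.
Proof.
rewrite -[n in RHS]card_ord -prodr_const.
have -> : \prod_(i in 'I_n) (1 + x) = \prod_(i < n) \sum_(b : bool) x ^+ b.
  by apply: eq_bigr => i _; rewrite big_bool /= addrC.
rewrite bigA_distr_bigA /=; apply: eq_bigr => f _.
by rewrite prodrXr.
Qed.

Lemma col_sum (R : realType) n (t : R) : 0 <= t <= 1 ->
  (1 + t) ^+ n <= \sum_(q : bool * {ffun 'I_n -> bool} | ~~ odd (fsum q.2))
                    t ^+ fsum q.2.
Proof.
move=> /andP [t0 t1].
have E1 : \sum_(q : bool * {ffun 'I_n -> bool} | ~~ odd (fsum q.2)) t ^+ fsum q.2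
   = 2 * \sum_(f : {ffun 'I_n -> bool} | ~~ odd (fsum f)) t ^+ fsum f.
  rewrite -(pair_big xpredT (fun f : {ffun 'I_n -> bool} => ~~ odd (fsum f))
             (fun (b : bool) f => t ^+ fsum f)) /=.
  by rewrite big_bool /= mulr2n mulrDl !mul1r.
have E2 : (1 + t) ^+ n + (1 - t) ^+ n
   = 2 * \sum_(f : {ffun 'I_n -> bool} | ~~ odd (fsum f)) t ^+ fsum f.
  rewrite -sum_pow -sum_pow -big_split /= [in RHS]big_mkcond mulr_sumr.
  apply: eq_bigr => f _.
  rewrite exprNn -signr_odd.
  by case: (odd _) => /=; rewrite ?expr1 ?expr0 ?mulN1r ?mul1r ?subrr ?mulr0 // mulr2n mulrDl mul1r.
rewrite E1 -E2 lerDl; apply: exprn_ge0; lra.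
Qed.

Section Main.
Variables m n : nat.
Hypotheses (m0 : (0 < m)%N) (n0 : (0 < n)%N).
Definition pget (P : {ffun 'I_m -> bool * {ffun 'I_n -> bool}}) (c : nat)
  : bool * {ffun 'I_n -> bool} :=
  if insub c is Some o then P o else (false, [ffun=> false]).
Definition Fn P (i j : nat) : bool := odd i && crow (pget P i./2) j.
Definition Psi P : {ffun 'I_(m.*2).-1.+1 * 'I_(n.*2).-1.+1 -> bool} :=
  [ffun z : 'I_(m.*2).-1.+1 * 'I_(n.*2).-1.+1 => Fn P z.1 z.2].

Lemma pget_val P (o : 'I_m) : pget P o = P o.
Proof. by rewrite /pget valK. Qed.

Lemma pget_even (P : {ffun 'I_m -> bool * {ffun 'I_n -> bool}}) : (forall c, ~~ odd (fsum (P c).2)) ->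
  forall c, ~~ odd (fsum (pget P c).2).
Proof.
move=> ev c; rewrite /pget; case: (insub c) => [k|] //=.
by rewrite /fsum big1 // => i _; rewrite ffunE.
Qed.

Lemma m2 : (0 < m.*2)%N. Proof. by rewrite double_gt0. Qed.
Lemma n2 : (0 < n.*2)%N. Proof. by rewrite double_gt0. Qed.

Lemma per_ext_Psi P u :
  per_ext (Psi P) u = Fn P (tI (m.*2) u.1) (tI (n.*2) u.2).
Proof. by rewrite /per_ext ffunE /= !torus_val // ?m2 ?n2. Qed.

Lemma adm_Psi P : admissible (per_ext (Psi P)).
Proof.
have H1 : forall u v : int * int, per_ext (Psi P) u -> per_ext (Psi P) v ->
    v.1 = u.1 + (1%N)%:Z -> False.
  move=> u v; rewrite !per_ext_Psi => /andP [ou _] /andP [ov _] E.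
  move: ov; rewrite E tI_add ?m2 // odd_mod ?odd_double // addn1 /= ou.
  by [].
have H2 : forall u v : int * int, per_ext (Psi P) u -> per_ext (Psi P) v ->
    v.1 = u.1 -> v.2 = u.2 + (1%N)%:Z -> False.
  move=> u v; rewrite !per_ext_Psi => /andP [_ cu] /andP [_ cv] E1 E2.
  move: cv; rewrite E1 E2 tI_add ?n2 // addn1 => cv.
  have := crow_adj n (pget P (tI (m.*2) u.1)./2) (tI (n.*2) u.2) n0 (tI_lt (n.*2) u.2 n2).
  by rewrite cu cv.
move=> [u1 u2] [v1 v2] su sv neq; apply/negP => /andP [h1 h2] /=.
simpl in h1, h2.
have [E|[E|E]] : u1 = v1 \/ v1 = u1 + (1%N)%:Z \/ u1 = v1 + (1%N)%:Z by lia.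
- have [F|[F|F]] : u2 = v2 \/ v2 = u2 + (1%N)%:Z \/ u2 = v2 + (1%N)%:Z by lia.
  + by apply: neq; rewrite E F.
  + exact: (H2 _ _ su sv).
  + exact: (H2 _ _ sv su).
- exact: (H1 _ _ su sv).
- exact: (H1 _ _ sv su).
Qed.
Lemma fit (p1 p2 : int) (d1 d2 : bool) :
  face_in_tile (p1, p2) (p1 + (d1 : nat)%:Z, p2 + (d2 : nat)%:Z).
Proof. by case: d1; case: d2; rewrite /face_in_tile /=; apply/and4P; split; lia. Qed.

Lemma vac_Psi P (a b : nat) x y :
  vacant (per_ext (Psi P)) (x + a%:Z, y + b%:Z) ->
  ~~ crow (pget P (tI (m.*2) (x + a%:Z))./2) (tI (n.*2) (y + b%:Z)) &&
  ~~ crow (pget P (tI (m.*2) (x + a%:Z))./2) ((tI (n.*2) (y + b%:Z)).+1 %% n.*2).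
Proof.
set i := tI (m.*2) (x + a%:Z); set j := tI (n.*2) (y + b%:Z).
set q := pget P i./2.
apply: contraLR => H; rewrite negbK.
apply/existsP; exists (~~ odd i, ~~ crow q j).
rewrite /= fit andbT per_ext_Psi /= (tI_add (m.*2) (x + a%:Z) (~~ odd i)) ?m2 // (tI_add (n.*2) (y + b%:Z) (~~ crow q j)) ?n2 // -/i -/j /Fn.
have ilt : (i < m.*2)%N by apply: tI_lt; rewrite m2.
have jlt : (j < n.*2)%N by apply: tI_lt; rewrite n2.
have /andP [-> /eqP ->] : odd ((i + ~~ odd i) %% m.*2) && (((i + ~~ odd i) %% m.*2)./2 == i./2).
  case oi: (odd i) => /=.
    by rewrite addn0 modn_small // oi eqxx.
  have Ei := odd_double_half i; rewrite oi add0n in Ei.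
  move: Ei; set h := i./2 => Ei.
  have hl : (h < m)%N by rewrite -ltn_double Ei.
  have h1 : (h.*2.+1 < m.*2)%N by move: hl; rewrite -!muln2; lia.
  rewrite -Ei addn1 modn_small //.
  by rewrite half_d1 /= odd_double eqxx.
rewrite /= -/q.
case cj: (crow q j) => /=.
  by rewrite addn0 modn_small.
by move: H; rewrite cj /= addn1 negbK.
Qed.
Lemma nvac_Psi (P : {ffun 'I_m -> bool * {ffun 'I_n -> bool}}) x y : (forall c, ~~ odd (fsum (P c).2)) ->
  (n_vacant x y (m.*2) (n.*2) (per_ext (Psi P)) <= 2 * \sum_(c < m) fsum (P c).2)%N.
Proof.
move=> ev.
pose V (i j : nat) : bool :=
  ~~ crow (pget P i./2) j && ~~ crow (pget P i./2) (j.+1 %% n.*2).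
pose F (a b : nat) : nat := V (tI (m.*2) (x + a%:Z)) (tI (n.*2) (y + b%:Z)).
have E1 : n_vacant x y (m.*2) (n.*2) (per_ext (Psi P)) =
   (\sum_(p : 'I_(m.*2) * 'I_(n.*2))
      vacant (per_ext (Psi P)) ((x + (p.1 : nat)%:Z)%R, (y + (p.2 : nat)%:Z)%R))%N.
  rewrite /n_vacant cardsE -sum1_card big_mkcond /=; apply: eq_bigr => p _.
  by rewrite unfold_in /vacant /=; case: [exists _, _].
rewrite E1.
apply: (@leq_trans (\sum_(p : 'I_(m.*2) * 'I_(n.*2)) F p.1 p.2)%N).
  apply: leq_sum => p _; rewrite /F /V.
  by case: (vacant _ _) (vac_Psi P p.1 p.2 x y) => // ->.
rewrite -(pair_big xpredT xpredT (fun (a : 'I_(m.*2)) (b : 'I_(n.*2)) => F a b)) /=.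
have E2 : forall i : nat, (\sum_(j < n.*2) F i j =
    \sum_(j < n.*2) V (tI (m.*2) (x + i%:Z)) j)%N.
  move=> i; rewrite /F.
  under eq_bigr => j _ do rewrite (tI_add _ _ _ n2).
  exact: (sum_rot (n.*2) (tI (n.*2) y) (fun j => nat_of_bool (V (tI (m.*2) (x + i%:Z)) j))).
under eq_bigr => i _ do rewrite E2 (tI_add _ _ _ m2).
rewrite (sum_rot (m.*2) (tI (m.*2) x) (fun k => \sum_(j < n.*2) nat_of_bool (V k j))%N).
rewrite (sum_double m (fun k => \sum_(j < n.*2) nat_of_bool (V k j))%N).
apply: eq_leq; rewrite big_distrr /=; apply: eq_bigr => c _ /=.
by rewrite mul2n /V doubleK half_d1 vac_col // ?pget_even // pget_val addnn.
Qed.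
Lemma q_eq (q1 q2 : bool * {ffun 'I_n -> bool}) :
  ~~ odd (fsum q1.2) -> ~~ odd (fsum q2.2) ->
  (forall k, (k < n)%N -> cpar q1 k = cpar q2 k) -> q1 = q2.
Proof.
move=> e1 e2 Cq.
have h1 : q1.1 = q2.1.
  by have := Cq 0%N n0; rewrite /cpar !big_ord0 /= !addbF.
have h2 : q1.2 = q2.2.
  apply/ffunP => k; rewrite -!fget_val.
  rewrite -(cpar_trans n q1 k n0 e1 (ltn_ord k)) -(cpar_trans n q2 k n0 e2 (ltn_ord k)).
  by rewrite (Cq k (ltn_ord k)) (Cq _ (ltn_pmod _ n0)).
by move: h1 h2; case: q1 {e1 Cq} => [a1 f1]; case: q2 {e2} => [a2 f2] /= -> ->.
Qed.

Lemma Psi_inj (P1 P2 : {ffun 'I_m -> bool * {ffun 'I_n -> bool}}) :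
  (forall c, ~~ odd (fsum (P1 c).2)) -> (forall c, ~~ odd (fsum (P2 c).2)) ->
  Psi P1 = Psi P2 -> P1 = P2.
Proof.
move=> e1 e2 E.
apply/ffunP => c; rewrite -!pget_val; apply: q_eq; rewrite ?pget_even //.
move=> k kn.
have cm := ltn_ord c.
have := congr1 (fun F : {ffun 'I_(m.*2).-1.+1 * 'I_(n.*2).-1.+1 -> bool} =>
   F (inord (c.*2.+1), inord (k.*2))) E.
have a1 : (c.*2.+1 < (m.*2).-1.+1)%N.
  by rewrite prednK ?m2 //; move: cm; rewrite -!muln2; lia.
have a2 : (k.*2 < (n.*2).-1.+1)%N.
  by rewrite prednK ?n2 //; move: kn; rewrite -!muln2; lia.
by rewrite !ffunE /Fn /= !inordK // half_d1 /= odd_double /= !crow_even.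
Qed.
End Main.

Lemma Zper_ge (R : realType) (lam : R) (m n : nat) (x y : int) :
  (0 < m)%N -> (0 < n)%N -> 1 <= lam ->
  ((1 + lam `^ (- (1 / 2))) ^+ n) ^+ m <= Zper x y (m.*2) (n.*2) lam.
Proof.
move=> m0 n0 l1.
set t := lam `^ (- (1 / 2)).
have t0 : 0 <= t by apply: powR_ge0.
have t1 : t <= 1.
  have : lam `^ (- (1 / 2)) <= lam `^ 0 by apply: ler_powR => //; lra.
  by rewrite powRr0.
pose Qe := fun q : bool * {ffun 'I_n -> bool} => ~~ odd (fsum q.2).
pose A : {pred {ffun 'I_m -> bool * {ffun 'I_n -> bool}}} := ffun_on Qe.
have evA : forall P, P \in A -> forall c, ~~ odd (fsum (P c).2).
  by move=> P /ffun_onP.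
pose W := fun F : {ffun 'I_(m.*2).-1.+1 * 'I_(n.*2).-1.+1 -> bool} =>
  weight x y (m.*2) (n.*2) lam (per_ext F).
have S1 : \sum_(F in Psi m n @: A) W F <= Zper x y (m.*2) (n.*2) lam.
  rewrite /Zper [X in _ <= X](bigID (fun F => F \in Psi m n @: A)) /=.
  have -> : \sum_(i | `[< admissible (per_ext i) >] && (i \in Psi m n @: A))
             weight x y m.*2 n.*2 lam (per_ext i) = \sum_(F in Psi m n @: A) W F.
    apply: eq_bigl => F; case: (boolP (F \in Psi m n @: A)) => [H|_].
      move: (H) => /imsetP [P PA ->].
      by rewrite andbT; apply/asboolP; apply: adm_Psi.
    by rewrite andbF.
  rewrite lerDl; apply: sumr_ge0 => F _; exact: powR_ge0.
apply: (le_trans _ S1).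
rewrite big_imset /=; last first.
  move=> P1 P2 H1 H2; apply: Psi_inj => //; exact: evA.
apply: (@le_trans _ _ (\sum_(P in A) \prod_(c < m) t ^+ fsum (P c).2)); last first.
  apply: ler_sum => P PA.
  rewrite prodrXr -powR_mulrn // /t -powRrM /W /weight.
  apply: ler_powR => //.
  have := @nvac_Psi m n m0 n0 P x y (evA P PA).
  rewrite -(ler_nat R) natrM => H.
  move: H; set a := (n_vacant _ _ _ _ _)%:R; set b := (\sum_(_ < _) _)%:R => H.
  lra.
rewrite -(bigA_distr_big Qe (fun (c : 'I_m) q => t ^+ fsum q.2)).
have -> : ((1 + t) ^+ n) ^+ m = \prod_(c < m) (1 + t) ^+ n.
  by rewrite prodr_const card_ord.
apply: ler_prod => c _; rewrite exprn_ge0 /=; last lra.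
by apply: col_sum; rewrite t0 t1.
Qed.

Lemma expR_small (R : realType) (a t : R) : a < 1 -> 0 <= t -> t <= 1 - a ->
  expR (a * t) <= 1 + t.
Proof.
move=> ha t0 t1.
have E0 := expR_gt0 (a * t).
have P : expR (a * t) * (1 - a * t) <= 1.
  have := expR_ge1Dx (- (a * t)).
  have := expRD (a * t) (- (a * t)); rewrite subrr expR0 => H1 H2.
  have E1 := expR_gt0 (- (a * t)).
  nra.
have Q : 1 <= (1 + t) * (1 - a * t) by nra.
nra.
Qed.

Theorem corollary4p3 (R : realType) (c : R) :
  c < 1 / 4 ->
  exists lam0 : R, forall lam : R, lam0 < lam ->
  forall (x y : int) (K L : nat),
    (1 <= K)%N -> (1 <= L)%N ->
    even_int x -> even_int y -> ~~ odd K -> ~~ odd L ->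
    expR (c * powR lam (- (1 / 2)) * (K * L)%:R) <= Zper x y K L lam.
Proof.
move=> hc.
pose a := 4 * c.
have ha : a < 1 by rewrite /a; lra.
pose s := (1 - a) ^+ 2.
have s0 : 0 < s by rewrite /s exprn_gt0 // subr_gt0.
exists (1 + s^-1) => lam hlam x y K L K1 L1 _ _ eK eL.
have u0 : 0 < s^-1 by rewrite invr_gt0.
have us : s^-1 * s = 1 by rewrite mulVf // gt_eqF.
have l1 : 1 <= lam by lra.
have l0 : 0 < lam by lra.
set t := lam `^ (- (1 / 2)).
have t0 : 0 <= t by apply: powR_ge0.
have tt : t ^+ 2 = lam^-1.
  rewrite /t -powR_mulrn ?powR_ge0 // -powRrM.
  have -> : - (1 / 2) * 2%:R = (-1 : R) by field.
  by rewrite powR_inv1 // ltW.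
have vl : lam^-1 * lam = 1 by rewrite mulVf // gt_eqF.
have v0 : 0 < lam^-1 by rewrite invr_gt0.
have vs : lam^-1 <= s by nra.
have tle : t <= 1 - a.
  move: vs; rewrite -tt /s => vs; nra.
have EK := odd_double_half K; rewrite (negbTE eK) add0n in EK.
have EL := odd_double_half L; rewrite (negbTE eL) add0n in EL.
move: (K./2) EK K1 => m EK K1; subst K.
move: (L./2) EL L1 => n EL L1; subst L.
have m0 : (0 < m)%N by rewrite -double_gt0.
have n0 : (0 < n)%N by rewrite -double_gt0.
apply: (le_trans _ (@Zper_ge R lam m n x y m0 n0 l1)); rewrite -/t -exprM.
have -> : c * t * (m.*2 * n.*2)%:R = (a * t) * (n * m)%:R.
  by rewrite -!muln2 !natrM /a; ring.
rewrite expRM_natr; apply: lerXn2r.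
- by rewrite nnegrE ltW // expR_gt0.
- rewrite nnegrE; lra.
- exact: expR_small.
Qed.
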